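(* Let $(X,\mathfrak{m})$ be a measurable space with $\mathfrak{m}$ an infinite $\sigma$-algebra containing every finite subset of $X$, and let $X^*=\mathfrak{m}^\beta\setminus e(X)$. Then every nonempty $G_\delta$-subset of $X^*$ has nonempty interior in $X^*$.
   Context: An $\mathfrak{m}$-filter is a family $p\subseteq\mathfrak{m}$ with $\emptyset\notin p$, $X\in p$, closed under supersets belonging to $\mathfrak{m}$ and under finite intersections; an $\mathfrak{m}$-ultrafilter is a maximal $\mathfrak{m}$-filter; $\mathfrak{m}^\beta$ is the set of all $\mathfrak{m}$-ultrafilters, topologized by the base $\{\widehat{A}:A\in\mathfrak{m}\}$ where $\widehat{A}=\{p\in\mathfrak{m}^\beta:A\in p\}$. The map $e:X\to\mathfrak{m}^\beta$ is $e(x)=\{A\in\mathfrak{m}:x\in A\}$. $X^*$ carries the subspace topology. *)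

(* Defs.v *)
(* Subsets of X are predicates X -> Prop; families of subsets
   are predicates (X -> Prop) -> Prop. Set equality is Leibniz equality of
   predicates (extensional via functional/propositional extensionality). *)
From Stdlib Require Import List.

Section Defs.
Variable X : Type.

Definition emptyset : X -> Prop := fun _ => False.
Definition fullset : X -> Prop := fun _ => True.
Definition inter (A B : X -> Prop) : X -> Prop := fun x => A x /\ B x.
Definition subset (A B : X -> Prop) : Prop := forall x, A x -> B x.

Definition sigma_algebra (m : (X -> Prop) -> Prop) : Prop :=
  m emptyset /\
  (forall A, m A -> m (fun x => ~ A x)) /\
  (forall F : nat -> X -> Prop, (forall n, m (F n)) -> m (fun x => exists n, F n x)).

Definition finite_set (A : X -> Prop) : Prop :=
  exists l : list X, forall x, A x <-> In x l.

Definition infinite_family (m : (X -> Prop) -> Prop) : Prop :=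
  ~ exists l : list (X -> Prop), forall A, m A -> In A l.

Definition m_filter (m : (X -> Prop) -> Prop) (p : (X -> Prop) -> Prop) : Prop :=
  (forall A, p A -> m A) /\
  ~ p emptyset /\
  p fullset /\
  (forall A B, p A -> m B -> subset A B -> p B) /\
  (forall A B, p A -> p B -> p (inter A B)).

Definition m_ultrafilter (m : (X -> Prop) -> Prop) (p : (X -> Prop) -> Prop) : Prop :=
  m_filter m p /\
  forall q, m_filter m q -> (forall A, p A -> q A) -> forall A, q A -> p A.

Definition e_pt (m : (X -> Prop) -> Prop) (x : X) : (X -> Prop) -> Prop :=
  fun A => m A /\ A x.

Definition in_Xstar (m : (X -> Prop) -> Prop) (p : (X -> Prop) -> Prop) : Prop :=
  m_ultrafilter m p /\ ~ exists x, p = e_pt m x.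

(* open subsets of m^beta for the topology generated by the base {A^ : A in m} *)
Definition beta_open (m : (X -> Prop) -> Prop) (U : ((X -> Prop) -> Prop) -> Prop) : Prop :=
  (forall p, U p -> m_ultrafilter m p) /\
  forall p, U p -> exists A, m A /\ p A /\
     (forall q, m_ultrafilter m q -> q A -> U q).

Definition Xstar_open (m : (X -> Prop) -> Prop) (V : ((X -> Prop) -> Prop) -> Prop) : Prop :=
  exists U, beta_open m U /\ forall p, V p <-> (U p /\ in_Xstar m p).

Definition Xstar_Gdelta (m : (X -> Prop) -> Prop) (G : ((X -> Prop) -> Prop) -> Prop) : Prop :=
  exists V : nat -> ((X -> Prop) -> Prop) -> Prop,
    (forall n, Xstar_open m (V n)) /\ forall p, G p <-> (forall n, V n p).

Definition Xstar_nonempty_interior (m : (X -> Prop) -> Prop) (G : ((X -> Prop) -> Prop) -> Prop) : Prop :=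
  exists V, Xstar_open m V /\ (exists p, V p) /\ (forall p, V p -> G p).

End Defs.

(* Main.v *)
Require Import Defs.
From Stdlib Require Import Lia.
From mathcomp Require Import all_boot.
From mathcomp Require Import boolp classical_sets filter.

Lemma free_uf_exists (X:Type) (x : nat -> X) : exists U : (X -> Prop) -> Prop,
  (~ U (fun _ => False)) /\ U (fun _ => True) /\
  (forall P Q : X -> Prop, (forall y, P y -> Q y) -> U P -> U Q) /\
  (forall P Q, U P -> U Q -> U (fun y => P y /\ Q y)) /\
  (forall P, U P \/ U (fun y => ~ P y)) /\
  (forall n, U (fun y => exists k, (n <= k)%coq_nat /\ y = x k)).
Proof.
pose F := fun S : X -> Prop => exists n, forall k, (n <= k)%coq_nat -> S (x k).
have FF : ProperFilter F.
  apply: Build_ProperFilter_ex.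
    by move=> P [n Hn]; exists (x n); apply: Hn.
  split.
  - by exists 0.
  - move=> A B [n Hn] [n' Hn']; exists (Nat.max n n') => k Hk; split.
      apply: Hn; lia.
    apply: Hn'; lia.
  - by move=> P Q PQ [n Hn]; exists n => k Hk; apply: PQ; apply: Hn.
have [U [UU FU]] := ultraFilterLemma FF.
exists U; split; first exact: (filter_not_empty U).
split; first exact: (@filterT _ U).
split; first by move=> P Q PQ; apply: filterS.
split; first by move=> P Q; apply: filterI.
split; first by move=> P; apply: in_ultra_setVsetC.
move=> n; apply: FU; exists n => k Hk; by exists k.
Qed.

From Stdlib Require Import Classical FunctionalExtensionality PropExtensionality IndefiniteDescription List Arith.

Lemma sext {X : Type} (A B : X -> Prop) : (forall x, A x <-> B x) -> A = B.
Proof.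
  intro H. apply functional_extensionality. intro x. apply propositional_extensionality. apply H.
Qed.

Section Aux.
Variable X : Type.
Variable m : (X -> Prop) -> Prop.
Hypothesis Hsig : sigma_algebra X m.
Hypothesis Hfin : forall A : X -> Prop, finite_set X A -> m A.

Lemma m_empty : m (emptyset X).
Proof. destruct Hsig as [H _]. exact H. Qed.

Lemma m_compl A : m A -> m (fun x => ~ A x).
Proof. destruct Hsig as [_ [H _]]. apply H. Qed.

Lemma m_full : m (fullset X).
Proof.
  replace (fullset X) with (fun x => ~ emptyset X x).
  - apply m_compl, m_empty.
  - apply sext. intro x. unfold fullset, emptyset. tauto.
Qed.

Lemma m_inter A B : m A -> m B -> m (inter X A B).
Proof.
  intros HA HB.
  pose (F := fun n : nat => match n with 0 => (fun x => ~ A x) | _ => (fun x => ~ B x) end).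
  assert (HF : forall n, m (F n)).
  { intro n. destruct n; simpl; apply m_compl; assumption. }
  destruct Hsig as [_ [_ Hu]].
  pose proof (m_compl _ (Hu F HF)) as H.
  replace (inter X A B) with (fun x => ~ (exists n, F n x)). exact H.
  apply sext. intro x. unfold inter. split.
  - intro Hn. split.
    + apply NNPP. intro Hc. apply Hn. exists 0. exact Hc.
    + apply NNPP. intro Hc. apply Hn. exists 1. exact Hc.
  - intros [HAx HBx] [n Hn]. destruct n; simpl in Hn; tauto.
Qed.

Lemma m_single (a : X) : m (fun y => y = a).
Proof.
  apply Hfin. exists (a :: nil). intro x. simpl. split; intro H; [left; symmetry; exact H|destruct H as [H|[]]; symmetry; exact H].
Qed.

Lemma uf_prime q A : m_ultrafilter X m q -> m A -> q A \/ q (fun x => ~ A x).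
Proof.
  intros [[Hm [Hne [Hfull [Hsup Hint]]]] Hmax] HA.
  destruct (classic (q A)) as [H|H]; [left; exact H|right].
  pose (q2 := fun C => m C /\ exists P, q P /\ forall y, P y -> ~ A y -> C y).
  assert (Hf2 : m_filter X m q2).
  { split; [|split; [|split; [|split]]].
    - intros C [HC _]. exact HC.
    - intros [_ [P [HP HPC]]]. apply H. apply (Hsup P A HP HA).
      intros y Py. apply NNPP. intro Hn. exact (HPC y Py Hn).
    - split; [apply m_full|]. exists (fullset X). split; [exact Hfull|]. intros; exact I.
    - intros C D [HC [P [HP HPC]]] HD HCD. split; [exact HD|].
      exists P. split; [exact HP|]. intros y Py Ay. apply HCD, HPC; assumption.
    - intros C D [HC [P [HP HPC]]] [HD [P' [HP' HPC']]].
      split; [apply m_inter; assumption|].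
      exists (inter X P P'). split; [apply Hint; assumption|].
      intros y [Py P'y] Ay. split; [apply HPC|apply HPC']; assumption. }
  apply (Hmax q2 Hf2).
  - intros C HC. split; [apply Hm; exact HC|]. exists C. split; [exact HC|]. intros; assumption.
  - split; [apply m_compl; exact HA|]. exists (fullset X). split; [exact Hfull|].
    intros; assumption.
Qed.

Lemma uf_free q : in_Xstar X m q ->
  forall l C, q C -> (forall y, C y -> In y l) -> False.
Proof.
  intros [Hu Hnp].
  assert (Hu' := Hu).
  destruct Hu' as [[Hm [Hne [Hfull [Hsup Hint]]]] Hmax].
  induction l as [|a l IH]; intros C HC HCl.
  - apply Hne. apply (Hsup C); [exact HC|apply m_empty|].
    intros y Cy. destruct (HCl y Cy).
  - destruct (uf_prime q _ Hu (m_single a)) as [Ha|Ha].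
    + apply Hnp. exists a. apply sext. intro A. unfold e_pt. split.
      * intro HA. split; [apply Hm; exact HA|].
        apply NNPP. intro Hn. apply Hne.
        apply (Hsup (inter X A (fun y => y = a))); [apply Hint; assumption|apply m_empty|].
        intros y [Ay ya]. subst. contradiction.
      * intros [HmA HAa]. apply (Hsup (fun y => y = a)); [exact Ha|exact HmA|].
        intros y ya; subst; exact HAa.
    + apply (IH (inter X C (fun y => ~ y = a))).
      * apply Hint; assumption.
      * intros y [Cy ya]. destruct (HCl y Cy) as [e|e]; [congruence|exact e].
Qed.

End Aux.

Theorem theorem3p2 (X : Type) (m : (X -> Prop) -> Prop)
  (Hsig : sigma_algebra X m)
  (Hfin : forall A : X -> Prop, finite_set X A -> m A)
  (Hinf : infinite_family X m)
  (G : ((X -> Prop) -> Prop) -> Prop)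
  (HG : Xstar_Gdelta X m G)
  (Hne : exists p, G p) :
  Xstar_nonempty_interior X m G.
Proof.
  destruct Hne as [p Gp]. destruct HG as [V [HVo HVG]].
  assert (Vp : forall n, V n p) by (apply HVG; exact Gp).
  assert (pX : in_Xstar X m p).
  { destruct (HVo 0) as [U [_ HU]]. apply (HU p). apply Vp. }
  assert (pU := proj1 pX).
  destruct pU as [[pm [pne [pfull [psup pint]]]] _].
  assert (Hch : forall n, exists A, m A /\ p A /\ forall q, in_Xstar X m q -> q A -> V n q).
  { intro n. destruct (HVo n) as [U [[_ HU] HVU]].
    destruct (HU p (proj1 (proj1 (HVU p) (Vp n)))) as [A [HA [pA HAq]]].
    exists A. split; [exact HA|]. split; [exact pA|].
    intros q qX qA. apply HVU. split; [|exact qX]. apply HAq; [exact (proj1 qX)|exact qA]. }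
  pose (A := fun n => proj1_sig (constructive_indefinite_description _ (Hch n))).
  assert (HA : forall n, m (A n) /\ p (A n) /\ forall q, in_Xstar X m q -> q (A n) -> V n q).
  { intro n. exact (proj2_sig (constructive_indefinite_description _ (Hch n))). }
  pose (B := fix B n := match n with 0 => A 0 | S k => inter X (B k) (A (S k)) end).
  assert (HB : forall n, m (B n) /\ p (B n) /\ (forall y, B n y -> A n y)).
  { induction n as [|n IH]; simpl.
    - destruct (HA 0) as [h1 [h2 _]]. split; [exact h1|split; [exact h2|]]. auto.
    - destruct IH as [i1 [i2 _]]. destruct (HA (S n)) as [h1 [h2 _]].
      split; [apply m_inter; assumption|]. split; [apply pint; assumption|].
      intros y [_ Hy]. exact Hy. }
  assert (Bdec : forall n k, le n k -> forall y, B k y -> B n y).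
  { intros n k Hnk. induction Hnk as [|k Hk IH]; [auto|].
    intros y [Hy _]. apply IH, Hy. }
  assert (Hex : forall n l, exists y, B n y /\ ~ In y l).
  { intros n l. apply NNPP. intro Hn.
    apply (uf_free X m Hsig Hfin p pX l (B n) (proj1 (proj2 (HB n)))).
    intros y By. apply NNPP. intro Hy. apply Hn. exists y. split; assumption. }
  pose (pick := fun n l => proj1_sig (constructive_indefinite_description _ (Hex n l))).
  assert (Hpick : forall n l, B n (pick n l) /\ ~ In (pick n l) l).
  { intros n l. exact (proj2_sig (constructive_indefinite_description _ (Hex n l))). }
  pose (L := fix L n := match n with 0 => nil | S k => L k ++ (pick k (L k) :: nil) end).
  pose (x := fun k => pick k (L k)).
  assert (HxB : forall k, B k (x k)) by (intro k; apply Hpick).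
  assert (HxL : forall n k, lt k n -> In (x k) (L n)).
  { induction n as [|n IH]; intros k Hk; [inversion Hk|].
    simpl. apply in_or_app. destruct (Nat.eq_dec k n) as [e|e].
    - subst. right. left. reflexivity.
    - left. apply IH. lia. }
  assert (Hxinj : forall j k, x j = x k -> j = k).
  { intros j k e. destruct (lt_eq_lt_dec j k) as [[h|h]|h]; [|exact h|].
    - exfalso. apply (proj2 (Hpick k (L k))). fold (x k). rewrite <- e. apply HxL; exact h.
    - exfalso. apply (proj2 (Hpick j (L j))). fold (x j). rewrite e. apply HxL; exact h. }
  pose (D := fun y => exists k, y = x k).
  assert (mD : m D).
  { destruct Hsig as [_ [_ Hu]]. apply (Hu (fun k y => y = x k)).
    intro n. apply m_single; assumption. }
  destruct (free_uf_exists X x) as [U [U0 [UT [US [UI [UC Utail]]]]]].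
  pose (q := fun C => m C /\ U C).
  assert (qX : in_Xstar X m q).
  { assert (qf : m_filter X m q).
    { split; [|split; [|split; [|split]]].
      - intros C [h _]; exact h.
      - intros [_ h]. exact (U0 h).
      - split; [apply m_full; assumption|exact UT].
      - intros C E [_ h] hE hCE. split; [exact hE|]. apply (US C); assumption.
      - intros C E [h h2] [h' h2']. split; [apply m_inter; assumption|].
        apply (UI C E); assumption. }
    split; [split; [exact qf|]|].
    - intros q' [q'm [q'ne [_ [q'sup q'int]]]] Hqq C HC. split; [apply q'm; exact HC|].
      destruct (UC C) as [h|h]; [exact h|exfalso].
      assert (h2 : q' (fun y => ~ C y)).
      { apply Hqq. split; [apply m_compl; [exact Hsig| apply q'm; exact HC]|exact h]. }
      apply q'ne. apply (q'sup (inter X C (fun y => ~ C y))); [apply q'int; assumption| apply m_empty; exact Hsig|].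
      intros y [h3 h4]. contradiction.
    - intros [a Ha].
      assert (Hs : q (fun y => y = a)).
      { rewrite Ha. split; [apply m_single; assumption|reflexivity]. }
      destruct Hs as [_ Us].
      destruct (classic (exists k, a = x k)) as [[k ek]|nk].
      + apply U0. apply (US (fun y => (exists j, le (S k) j /\ y = x j) /\ y = a)).
        * intros y [[j [hj ej]] ya]. assert (hjk : x j = x k) by congruence. apply Hxinj in hjk. lia.
        * apply UI; [apply Utail|exact Us].
      + apply U0. apply (US (fun y => (exists j, le 0 j /\ y = x j) /\ y = a)).
        * intros y [[j [hj ej]] ya]. apply nk. exists j. congruence.
        * apply UI; [apply Utail|exact Us]. }
  assert (qD : q D).
  { split; [exact mD|]. refine (US _ D _ (Utail 0)). intros y [k [_ e]]. exists k. exact e. }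
  exists (fun r => r D /\ in_Xstar X m r).
  split; [|split].
  - exists (fun r => m_ultrafilter X m r /\ r D). split.
    + split; [intros r [h _]; exact h|].
      intros r [hr rD]. exists D. split; [exact mD|]. split; [exact rD|].
      intros r' h1 h2. split; assumption.
    + intro r. split.
      * intros [rD rX]. split; [split; [exact (proj1 rX)|exact rD]|exact rX].
      * intros [[_ rD] rX]. split; assumption.
  - exists q. split; assumption.
  - intros r [rD rX]. apply HVG. intro n.
    destruct (HA n) as [hm [_ hV]]. apply hV; [exact rX|].
    assert (rX' := rX). destruct rX' as [ru _].
    assert (ru' := ru). destruct ru' as [[rm [rne [rfull [rsup rint]]]] _].
    assert (rB : r (B n)).
    { destruct (uf_prime X m Hsig r (B n) ru (proj1 (HB n))) as [h|h]; [exact h|exfalso].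
      apply (uf_free X m Hsig Hfin r rX (L n) (inter X D (fun y => ~ B n y))).
      - apply rint; assumption.
      - intros y [[k ek] Hy]. subst y. destruct (lt_dec k n) as [hl|hl].
        + apply HxL; exact hl.
        + exfalso. apply Hy. apply (Bdec n k); [apply Nat.nlt_ge; exact hl|apply HxB]. }
    apply (rsup (B n)); [exact rB|exact hm|]. exact (proj2 (proj2 (HB n))).
Qed.
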